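(* Let $L_w=BWB^\top\in\mathbb{R}^{n\times n}$ be the weighted Laplacian of a connected undirected graph with strictly positive edge weights. Let $i\neq j$ be two nodes and $E=e_i-e_j\in\mathbb{R}^n$ (a single port). Consider the single-input single-output system $\dot x=-L_w x + E d$, $y=E^\top x$, with $d\in\mathbb{R}$. Then the induced $\mathcal{L}_2$-gain ($\mathcal{H}_\infty$-norm) from $d$ to $y$ equals $$\gamma = R_{ij}(L_w) := (e_i-e_j)^\top L_w^{\dagger}(e_i-e_j),$$ the effective resistance between nodes $i$ and $j$.
   Context: A weighted undirected graph has nodes $v_1,\dots,v_n$, edges $\mathcal{E}_1,\dots,\mathcal{E}_m$ and weights $w_1,\dots,w_m$. With an arbitrary orientation of each edge, the incidence matrix $B\in\mathbb{R}^{n\times m}$ has $B_{ij}=1$ if edge $\mathcal{E}_j$ starts at $v_i$, $-1$ if it ends at $v_i$, $0$ otherwise; $W=\mathrm{diag}(w_1,\dots,w_m)$ and $L_w=BWB^\top$. $e_1,\dots,e_n$ is the canonical basis of $\mathbb{R}^n$ and $L_w^\dagger$ is the Moore–Penrose pseudoinverse. The induced $\mathcal{L}_2$-gain from $d$ to $y$ (with $x(0)=0$) is $\sup_{d\in L_2[0,\infty),d\ne0}\|y\|_2/\|d\|_2$, equivalently $\sup_{\omega\in\mathbb{R}}|\mathbb{G}(j\omega)|$ with $\mathbb{G}(s)=E^\top(sI+L_w)^{-1}E$. *)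

(* Defs.v *)
From HB Require Import structures.
From mathcomp Require Import all_boot all_order all_algebra.
From Stdlib Require Import ClassicalEpsilon.
Set Implicit Arguments. Unset Strict Implicit. Unset Printing Implicit Defensive.
Import Order.TTheory GRing.Theory Num.Theory.
Local Open Scope ring_scope.

(* Graph on nodes 'I_n with m edges; edge k goes from src k to dst k
   (arbitrary orientation). *)

Definition incidence (C : numClosedFieldType) (n m : nat)
  (src dst : 'I_m -> 'I_n) : 'M[C]_(n, m) :=
  \matrix_(i < n, k < m) ((i == src k)%:R - (i == dst k)%:R).

Definition laplacian (C : numClosedFieldType) (n m : nat)
  (src dst : 'I_m -> 'I_n) (w : 'I_m -> C) : 'M[C]_n :=
  incidence C src dst *m diag_mx (\row_k w k) *m (incidence C src dst)^T.

Definition simple_edges (n m : nat) (src dst : 'I_m -> 'I_n) : Prop :=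
  (forall k, src k != dst k) /\
  (forall k l, k != l ->
     ~ ((src k == src l) && (dst k == dst l) || (src k == dst l) && (dst k == src l))).

Definition adj (n m : nat) (src dst : 'I_m -> 'I_n) : rel 'I_n :=
  fun x y => [exists k, ((src k == x) && (dst k == y)) || ((src k == y) && (dst k == x))].

Definition connected_graph (n m : nat) (src dst : 'I_m -> 'I_n) : Prop :=
  forall x y : 'I_n, connect (adj src dst) x y.

Definition ctr (C : numClosedFieldType) (p q : nat) (A : 'M[C]_(p, q)) : 'M[C]_(q, p) :=
  (map_mx Num.conj A)^T.

Definition is_MP_pinv (C : numClosedFieldType) (n : nat) (A X : 'M[C]_n) : Prop :=
  [/\ A *m X *m A = A, X *m A *m X = X,
      ctr (A *m X) = A *m X & ctr (X *m A) = X *m A].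

Definition pinv (C : numClosedFieldType) (n : nat) (A : 'M[C]_n) : 'M[C]_n :=
  epsilon (inhabits 0) (is_MP_pinv A).

Definition port (C : numClosedFieldType) (n : nat) (i j : 'I_n) : 'cV[C]_n :=
  \col_k ((k == i)%:R - (k == j)%:R).

Definition transfer (C : numClosedFieldType) (n : nat) (L : 'M[C]_n)
  (E : 'cV[C]_n) (s : C) : C :=
  (E^T *m invmx (s%:M + L) *m E) ord0 ord0.

Definition is_lub (C : numClosedFieldType) (P : C -> Prop) (g : C) : Prop :=
  (forall x, P x -> x <= g) /\ (forall b, (forall x, P x -> x <= b) -> g <= b).

(* Set { |G(j w)| : w real, w <> 0 }  (at w = 0 the expression sI+L is singular;
   G extends continuously there, so the sup over w <> 0 equals the sup over all w). *)
Definition freq_gains (C : numClosedFieldType) (n : nat) (L : 'M[C]_n)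
  (E : 'cV[C]_n) : C -> Prop :=
  fun x => exists om : C, [/\ om \is Num.real, om != 0 & x = `|transfer L E ('i * om)|].

Definition is_hinf_norm (C : numClosedFieldType) (n : nat) (L : 'M[C]_n)
  (E : 'cV[C]_n) (g : C) : Prop := is_lub (freq_gains L E) g.

Definition eff_resistance (C : numClosedFieldType) (n : nat) (L : 'M[C]_n)
  (i j : 'I_n) : C :=
  ((port C i j)^T *m pinv L *m port C i j) ord0 ord0.

(* Main.v *)
Require Import Defs.
From HB Require Import structures.
From mathcomp Require Import all_boot all_order all_algebra.
From Stdlib Require Import ClassicalEpsilon.
From mathcomp Require Import ring.
Import Order.TTheory GRing.Theory Num.Theory.
Set Implicit Arguments. Unset Strict Implicit.
Local Open Scope ring_scope.



Lemma ctrE (C : numClosedFieldType) p q (A : 'M[C]_(p, q)) i j : ctr A i j = (A j i)^*.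
Proof. by rewrite /ctr !mxE. Qed.

Lemma ctrM (C : numClosedFieldType) p q r (A : 'M[C]_(p, q)) (B : 'M[C]_(q, r)) :
  ctr (A *m B) = ctr B *m ctr A.
Proof. by rewrite /ctr (map_mxM Num.conj_op) trmx_mul. Qed.

Lemma ctrK (C : numClosedFieldType) p q (A : 'M[C]_(p, q)) : ctr (ctr A) = A.
Proof. by apply/matrixP => i k; rewrite !ctrE conjCK. Qed.

Lemma ctrD (C : numClosedFieldType) p q (A B : 'M[C]_(p, q)) : ctr (A + B) = ctr A + ctr B.
Proof. by apply/matrixP => i k; rewrite /ctr !mxE rmorphD. Qed.

Lemma ctrN (C : numClosedFieldType) p q (A : 'M[C]_(p, q)) : ctr (- A) = - ctr A.
Proof. by apply/matrixP => i k; rewrite /ctr !mxE rmorphN. Qed.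

Lemma ctrB (C : numClosedFieldType) p q (A B : 'M[C]_(p, q)) : ctr (A - B) = ctr A - ctr B.
Proof. by rewrite ctrD ctrN. Qed.

Lemma ctrZ (C : numClosedFieldType) p q (a : C) (A : 'M[C]_(p, q)) : ctr (a *: A) = a^* *: ctr A.
Proof. by apply/matrixP => i k; rewrite /ctr !mxE rmorphM. Qed.

Lemma ctr_scalar (C : numClosedFieldType) p (a : C) : ctr (a%:M : 'M_p) = a^*%:M.
Proof. by apply/matrixP => i k; rewrite /ctr !mxE eq_sym rmorphMn. Qed.

Lemma ctr_inv (C : numClosedFieldType) p (A : 'M[C]_p) : ctr (invmx A) = invmx (ctr A).
Proof. by rewrite /ctr (map_invmx Num.conj_op) trmx_inv. Qed.

Lemma dot_sum (C : numClosedFieldType) p (u v : 'rV[C]_p) :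
  (u *m ctr v) 0 0 = \sum_k u 0 k * (v 0 k)^*.
Proof. by rewrite mxE; apply: eq_bigr => k _; rewrite ctrE. Qed.

Lemma dot_ge0 (C : numClosedFieldType) p (u : 'rV[C]_p) : 0 <= (u *m ctr u) 0 0.
Proof. by rewrite dot_sum; apply: sumr_ge0 => k _; apply: mul_conjC_ge0. Qed.

Lemma dot_eq0 (C : numClosedFieldType) p (u : 'rV[C]_p) : (u *m ctr u) 0 0 = 0 -> u = 0.
Proof.
rewrite dot_sum => H; apply/rowP => k; rewrite mxE.
have /(_ k isT) := psumr_eq0P (fun k _ => mul_conjC_ge0 (u 0 k)) H.
by move/eqP; rewrite mul_conjC_eq0 => /eqP.
Qed.

Lemma inj_unit (C : numClosedFieldType) p (A : 'M[C]_p) :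
  (forall u : 'rV_p, u *m A = 0 -> u = 0) -> A \in unitmx.
Proof.
move=> H; rewrite -row_free_unit -kermx_eq0; apply/eqP/row_matrixP => k.
by rewrite row0; apply: H; rewrite -row_mul mulmx_ker row0.
Qed.

Lemma ctr_real_unit (C : numClosedFieldType) p (A : 'M[C]_p) : ctr A = A -> ctr (invmx A) = invmx A.
Proof. by rewrite ctr_inv => ->. Qed.

Lemma mp_fact (C : numClosedFieldType) p r (F : 'M[C]_(p, r)) (G : 'M[C]_(r, p)) :
  row_full F -> row_free G -> exists X, is_MP_pinv (F *m G) X.
Proof.
move=> hFf hGf; set A := F *m G; have hA : A = F *m G by [].
set FF := ctr F *m F; set GG := G *m ctr G.
have fF : row_free (ctr F).
  rewrite /row_free /ctr mxrank_tr (mxrank_map Num.conj_op).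
  by move: hFf; rewrite /row_full.
have uFF : FF \in unitmx.
  apply: inj_unit => u Hu; apply/eqP; rewrite -(mulmx_free_eq0 _ fF); apply/eqP.
  by apply: dot_eq0; rewrite ctrM ctrK mulmxA -(mulmxA u) -/FF Hu mul0mx mxE.
have uGG : GG \in unitmx.
  apply: inj_unit => u Hu; apply/eqP; rewrite -(mulmx_free_eq0 _ hGf); apply/eqP.
  by apply: dot_eq0; rewrite ctrM mulmxA -(mulmxA u) -/GG Hu mul0mx mxE.
have hFF : ctr FF = FF by rewrite /FF ctrM ctrK.
have hGG : ctr GG = GG by rewrite /GG ctrM ctrK.
set P := invmx GG; set Q := invmx FF.
have e1 : G *m ctr G *m P = 1%:M by rewrite mulmxV.
have e2 : Q *m ctr F *m F = 1%:M by rewrite -mulmxA mulVmx.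
exists (ctr G *m P *m Q *m ctr F); split.
- have -> : A *m (ctr G *m P *m Q *m ctr F) *m A = F *m (G *m ctr G *m P) *m (Q *m ctr F *m F) *m G
    by rewrite hA !mulmxA.
  by rewrite e1 e2 mulmx1 mulmx1 hA.
- have -> : ctr G *m P *m Q *m ctr F *m A *m (ctr G *m P *m Q *m ctr F) = ctr G *m P *m (Q *m ctr F *m F) *m (G *m ctr G *m P) *m Q *m ctr F
    by rewrite hA !mulmxA.
  by rewrite e1 e2 mulmx1 mulmx1.
- have -> : A *m (ctr G *m P *m Q *m ctr F) = F *m (G *m ctr G *m P) *m Q *m ctr F
    by rewrite hA !mulmxA.
  by rewrite e1 mulmx1 !ctrM ctrK ctr_real_unit // mulmxA.
- have -> : ctr G *m P *m Q *m ctr F *m A = ctr G *m P *m (Q *m ctr F *m F) *m G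
    by rewrite hA !mulmxA.
  by rewrite e2 mulmx1 !ctrM ctrK ctr_real_unit // mulmxA.
Qed.

Lemma mp_exists (C : numClosedFieldType) p (A : 'M[C]_p) : exists X, is_MP_pinv A X.
Proof.
rewrite -{1}(mulmx_base A); apply: mp_fact; [exact: col_base_full | exact: row_base_free].
Qed.

Lemma pinvP (C : numClosedFieldType) p (A : 'M[C]_p) : is_MP_pinv A (pinv A).
Proof. rewrite /pinv; apply: epsilon_spec; exact: mp_exists. Qed.




Lemma cs_sum (C : numClosedFieldType) m (w p q : 'I_m -> C) : (forall k, 0 <= w k) ->
  (\sum_k w k * (p k * (q k)^*)) * (\sum_k w k * (p k * (q k)^*))^*
  <= (\sum_k w k * (p k * (p k)^*)) * (\sum_k w k * (q k * (q k)^*)).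
Proof.
move=> hw.
have wr k : (w k)^* = w k by apply: conj_Creal; apply: ger0_real.
rewrite rmorph_sum /=.
set A := fun k l => w k * (p k * (p k)^*) * (w l * (q l * (q l)^*)).
set B := fun k l => w k * (p k * (q k)^*) * (w l * (p l)^* * q l).
have -> : (\sum_k w k * (p k * (q k)^*)) * (\sum_k (w k * (p k * (q k)^*))^*)
   = \sum_k \sum_l B k l.
  rewrite mulr_suml; apply: eq_bigr => k _; rewrite mulr_sumr; apply: eq_bigr => l _.
  rewrite /B !rmorphM /= wr conjCK; ring.
have -> : (\sum_k w k * (p k * (p k)^*)) * (\sum_k w k * (q k * (q k)^*))
   = \sum_k \sum_l A k l.
  rewrite mulr_suml; apply: eq_bigr => k _; rewrite mulr_sumr; apply: eq_bigr => l _.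
  by [].
rewrite -subr_ge0.
have EE : \sum_k \sum_l A k l - \sum_k \sum_l B k l = \sum_k \sum_l (A k l - B k l).
  rewrite -sumrB; apply: eq_bigr => k _; by rewrite sumrB.
have E : \sum_k \sum_l (A l k - B l k) = \sum_k \sum_l (A k l - B k l) by rewrite exchange_big.
rewrite -(ler_pMn2r (n:=2)) // mul0rn mulr2n {1}EE EE -{2}E.
rewrite -big_split /=; apply: sumr_ge0 => k _; rewrite -big_split /=; apply: sumr_ge0 => l _.
have -> : A k l - B k l + (A l k - B l k) =
   w k * w l * ((p k * q l - p l * q k) * (p k * q l - p l * q k)^*).
  rewrite /A /B rmorphB !rmorphM /=; ring.
by apply: mulr_ge0; [apply: mulr_ge0 | apply: mul_conjC_ge0].
Qed.



Lemma ind_sum (C : numClosedFieldType) n (f : 'I_n -> C) a b :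
  \sum_x f x * ((x == a)%:R - (x == b)%:R) = f a - f b.
Proof.
have h c : \sum_x f x * (x == c)%:R = f c.
  rewrite (bigD1 c) //= eqxx mulr1 big1 ?addr0 // => x /negbTE ->; by rewrite mulr0.
by rewrite -(h a) -(h b) -sumrB; apply: eq_bigr => x _; rewrite mulrBr.
Qed.

Lemma ctr_inc (C : numClosedFieldType) n m (src dst : 'I_m -> 'I_n) :
  ctr (incidence C src dst) = (incidence C src dst)^T.
Proof. by apply/matrixP => x y; rewrite /ctr !mxE rmorphB !rmorph_nat. Qed.

Lemma inc_row (C : numClosedFieldType) n m (src dst : 'I_m -> 'I_n) (u : 'rV[C]_n) k :
  (u *m incidence C src dst) 0 k = u 0 (src k) - u 0 (dst k).
Proof.
rewrite mxE -ind_sum; apply: eq_bigr => x _; by rewrite mxE.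
Qed.

Lemma ctr_lap (C : numClosedFieldType) n m (src dst : 'I_m -> 'I_n) (w : 'I_m -> C) :
  (forall k, 0 < w k) -> ctr (laplacian src dst w) = laplacian src dst w.
Proof.
move=> hw; rewrite /laplacian !ctrM ctr_inc mulmxA; congr (_ *m _ *m _).
- by apply/matrixP => x y; rewrite /ctr !mxE rmorphB !rmorph_nat.
- apply/matrixP => x y; rewrite /ctr !mxE; case: (eqVneq x y) => [->|ne].
    by rewrite /= !mulr1n conj_Creal // ger0_real // ltW.
  by rewrite /= !mulr0n rmorph0.
Qed.

Lemma tr_lap (C : numClosedFieldType) n m (src dst : 'I_m -> 'I_n) (w : 'I_m -> C) :
  (laplacian src dst w)^T = laplacian src dst w.
Proof. by rewrite /laplacian !trmx_mul trmxK tr_diag_mx mulmxA. Qed.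

Lemma lap_form (C : numClosedFieldType) n m (src dst : 'I_m -> 'I_n) (w : 'I_m -> C) (p q : 'rV[C]_n) :
  (p *m laplacian src dst w *m ctr q) 0 0 =
  \sum_k w k * ((p 0 (src k) - p 0 (dst k)) * (q 0 (src k) - q 0 (dst k))^*).
Proof.
rewrite /laplacian -ctr_inc -!mulmxA -ctrM !mulmxA mxE; apply: eq_bigr => k _.
rewrite mul_mx_diag ctrE {1}mxE !inc_row mxE; ring. Qed.

Lemma lap_ker (C : numClosedFieldType) n m (src dst : 'I_m -> 'I_n) (w : 'I_m -> C) (u : 'rV[C]_n) :
  connected_graph src dst -> (forall k, 0 < w k) ->
  u *m laplacian src dst w = 0 -> forall x y, u 0 x = u 0 y.
Proof.
move=> hc hw H.
have h0 : (u *m laplacian src dst w *m ctr u) 0 0 = 0 by rewrite H mul0mx mxE.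
rewrite lap_form in h0.
have ge k : 0 <= w k * ((u 0 (src k) - u 0 (dst k)) * (u 0 (src k) - u 0 (dst k))^*).
  by apply: mulr_ge0; [apply: ltW | apply: mul_conjC_ge0].
have he k : u 0 (src k) = u 0 (dst k).
  have /(_ k isT) := psumr_eq0P (fun k _ => ge k) h0.
  move/eqP; rewrite mulf_eq0 (gt_eqF (hw k)) /= mul_conjC_eq0 subr_eq0.
  by move/eqP.
move=> x y; apply/eqP; rewrite eq_sym.
have cl : closed (adj src dst) [pred v | u 0 v == u 0 x].
  move=> a b /existsP [k /orP [/andP [/eqP <- /eqP <-] | /andP [/eqP <- /eqP <-]]];
  by rewrite !inE he.
by rewrite -[_ == _]/(y \in [pred v | u 0 v == u 0 x]) -(closed_connect cl (hc x y)) inE.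
Qed.



Lemma cs_dot (C : numClosedFieldType) p (u v : 'rV[C]_p) :
  (u *m ctr v) 0 0 * ((u *m ctr v) 0 0)^* <= (u *m ctr u) 0 0 * (v *m ctr v) 0 0.
Proof.
rewrite !dot_sum.
have := cs_sum (fun k => u 0 k) (fun k => v 0 k) (w:=fun _ => 1) (fun _ => ler01).
by rewrite !(eq_bigr _ (fun k _ => mul1r _)).
Qed.

Unset Implicit Arguments.
Theorem theorem3 (C : numClosedFieldType) (n m : nat)
  (src dst : 'I_m -> 'I_n) (w : 'I_m -> C) (i j : 'I_n) :
  simple_edges src dst ->
  connected_graph src dst ->
  (forall k, 0 < w k) ->
  i != j ->
  is_hinf_norm (laplacian src dst w) (port C i j)
    (eff_resistance (laplacian src dst w) i j).
Proof.
move=> hs hc hw hij.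
have hL : ctr (laplacian src dst w) = laplacian src dst w := ctr_lap src dst hw.
rewrite /is_hinf_norm /freq_gains /eff_resistance /transfer.
have hker' (u : 'rV_n) : u *m laplacian src dst w = 0 -> forall x y, u 0 x = u 0 y.
  by move=> H; apply: lap_ker hc hw H.
have hform := lap_form src dst w.
move: (laplacian src dst w) hL hform hker' => L hL hform hker'.
have hLge (p : 'rV_n) : 0 <= (p *m L *m ctr p) 0 0.
  by rewrite hform; apply: sumr_ge0 => k _; apply: mulr_ge0; [apply: ltW | apply: mul_conjC_ge0].
have he : ctr (port C i j)^T = port C i j.
  by apply/matrixP => x y; rewrite /ctr !mxE rmorphB !rmorph_nat.
have eE (p : 'rV_n) : (p *m port C i j) 0 0 = p 0 i - p 0 j.
  by rewrite mxE -ind_sum; apply: eq_bigr => x _; rewrite mxE.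
move: (port C i j) he eE (pinvP L) => E he eE [h1 h2 h3 h4].
move: (pinv L) h1 h2 h3 h4 => X h1 h2 h3 h4.
set e := E^T.
pose P := X *m L.
have hPL : P *m L = L.
  by rewrite /P -{1}h4 -{2}hL -ctrM mulmxA h1 hL.

have hPP : P *m P = P by rewrite /P mulmxA h2.
have hPc : ctr P = P by rewrite /P h4.
have heP : e *m P = e.
  set v := e - e *m P.
  have vL : v *m L = 0 by rewrite /v mulmxBl -mulmxA hPL subrr.
  have vP : v *m P = 0 by rewrite /v mulmxBl -mulmxA hPP subrr.
  have hv : v = 0.
    apply: dot_eq0; rewrite {2}/v ctrB ctrM hPc he mulmxBr mulmxA vP mul0mx subr0.
    by rewrite eE (hker' _ vL i j) subrr.
  by apply/eqP; rewrite eq_sym -subr_eq0 -/v hv.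
set y := e *m X.
have hy : y *m L = e by rewrite /y -mulmxA heP.
have hE : E = L *m ctr y by rewrite -hL -ctrM hy he.
set R := (e *m X *m E) 0 0.
have hR : R = (y *m L *m ctr y) 0 0.
  by rewrite /R hE !mulmxA -(mulmxA e) heP.
have hR0 : 0 <= R by rewrite hR; apply: hLge.
set Y := (y *m ctr y) 0 0.
have hY0 : 0 <= Y by apply: dot_ge0.
have key : forall om : C, om \is Num.real -> om != 0 ->
  let g := `|(e *m invmx (('i * om)%:M + L) *m E) 0 0| in
  g <= R /\ exists a b : C, [/\ 0 <= a, 0 <= b, a <= g, `|om| * b <= R &
       (R - a) ^+ 2 <= om ^+ 2 * (b * Y)].
  move=> om omr om0 g.
  set s := 'i * om.
  have hsc : s^* = - s by rewrite /s rmorphM /= conjCi conj_Creal // mulNr.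
  set M := s%:M + L.
  have hMe (u : 'rV_n) : u *m M = s *: u + u *m L by rewrite /M mulmxDr mul_mx_scalar.
  have uM : M \in unitmx.
    apply: inj_unit => u Hu.
    have h0 : s * (u *m ctr u) 0 0 + (u *m L *m ctr u) 0 0 = 0.
      have := congr1 (fun A => (A *m ctr u) 0 0) Hu.
      rewrite /= hMe mulmxDl -scalemxAl mul0mx => H.
      transitivity ((0 : 'M[C]_1) 0 0); last by rewrite mxE.
      rewrite -H.
      set A1 := u *m ctr u; set A2 := u *m L *m ctr u.
      by rewrite [in RHS]mxE [in RHS]mxE.
    have rb := ger0_real (dot_ge0 u); have ra := ger0_real (hLge u).
    have h0' : - s * (u *m ctr u) 0 0 + (u *m L *m ctr u) 0 0 = 0.
      by rewrite -hsc -(conj_Creal rb) -(conj_Creal ra) -rmorphM -rmorphD h0 rmorph0.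
    apply: dot_eq0; apply/eqP.
    have : (s + s) * (u *m ctr u) 0 0 = 0.
      rewrite -[RHS](subrr 0) -{1}h0 -[X in _ - X]h0'; ring.
    move/eqP; rewrite mulf_eq0 => /orP [H|//]; exfalso; move: H.
    by rewrite -mulr2n mulrn_eq0 /= /s mulf_eq0 (negbTE (neq0Ci C)) (negbTE om0).
  set zr := e *m invmx M.
  have hz : zr *m M = e by rewrite /zr mulmxKV.
  have hzL : zr *m L = e - s *: zr by rewrite -hz hMe [s *: zr + _]addrC addrK.
  set a := (zr *m L *m ctr zr) 0 0; set b := (zr *m ctr zr) 0 0.
  have ha0 : 0 <= a := hLge zr.
  have hb0 : 0 <= b := dot_ge0 zr.
  set G := (zr *m E) 0 0.
  have hg : g = `|G| by [].
  rewrite hg.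
  have hGab : G = a + s^* * b.
    rewrite /G -he -/e -hz ctrM /M ctrD ctr_scalar hL mulmxDl mulmxDr mul_scalar_mx -scalemxAr.
    by rewrite mxE mxE mulmxA addrC.
  have hGy : G = (zr *m L *m ctr y) 0 0 by rewrite /G hE mulmxA.
  have hcs : G * G^* <= a * R.
    rewrite hGy hR /a !hform; apply: cs_sum => k; exact: ltW.
  have hsc' : s^* = 'i * (- om) by rewrite hsc /s mulrN.
  have omb_r : om * b \is Num.real by rewrite realM // ger0_real.
  have hG2 : `|G| ^+ 2 = a ^+ 2 + (om * b) ^+ 2.
    by rewrite hGab hsc' -mulrA mulNr normC2_rect ?sqrrN ?(ger0_real ha0) ?rpredN.
  have sq0 (x : C) : x \is Num.real -> 0 <= x ^+ 2.
    by move=> xr; rewrite -real_normK // exprn_ge0.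
  have ag : a <= `|G|.
    rewrite -(ler_pXn2r (n:=2)) ?nnegrE // hG2 lerDl; exact: sq0.
  have gb : `|om| * b <= `|G|.
    rewrite -(ler_pXn2r (n:=2)) ?nnegrE ?mulr_ge0 // hG2 exprMn real_normK // -exprMn lerDr.
    exact: exprn_ge0.
  have gG2 : `|G| ^+ 2 <= a * R by rewrite normCK.
  have aR : a <= R.
    case: (eqVneq a 0) => [->//|an0].
    have ap : 0 < a by rewrite lt_def an0.
    rewrite -(ler_pM2l ap) -expr2; apply: le_trans gG2.
    by rewrite hG2 lerDl; apply: sq0.
  have gR : `|G| <= R.
    rewrite -(ler_pXn2r (n:=2)) ?nnegrE //; apply: le_trans gG2 _.
    by rewrite expr2 ler_wpM2r.
  split => //; exists a, b; split => //; first exact: le_trans gb gR.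
  set c := (zr *m ctr y) 0 0.
  have HM : y *m L *m ctr y - zr *m L *m ctr zr = s *: (zr *m ctr y) + s^* *: (zr *m ctr zr).
    have -> : y *m L *m ctr y - zr *m L *m ctr zr =
              (y - zr) *m L *m ctr y + zr *m L *m ctr (y - zr).
      by rewrite ctrB !mulmxBl mulmxBr addrA subrK.
    have hd : (y - zr) *m L = s *: zr by rewrite mulmxBl hy hzL opprB addrC subrK.
    have -> : zr *m L *m ctr (y - zr) = zr *m ctr ((y - zr) *m L) by rewrite ctrM hL mulmxA.
    by rewrite hd ctrZ -scalemxAl -scalemxAr.
  have hRa : R - a = s * c + s^* * b.
    rewrite hR /a /c /b; move: HM.
    move: (y *m L *m ctr y) (zr *m L *m ctr zr) (zr *m ctr y) (zr *m ctr zr) => A1 A2 A3 A4 HM.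
    by have := congr1 (fun A : 'M[C]_1 => A 0 0) HM; rewrite /= !mxE.
  have hRr : R - a \is Num.real by rewrite rpredB ?ger0_real.
  have omr2 : 0 <= om ^+ 2 by apply: sq0.
  have e3 : (R - a) ^+ 2 + (om * b) ^+ 2 = om ^+ 2 * (c * c^*).
    have -> : (R - a) ^+ 2 + (om * b) ^+ 2 = `|R - a + 'i * (om * b)| ^+ 2 by rewrite normC2_rect.
    have -> : R - a + 'i * (om * b) = s * c by rewrite hRa hsc' /s; ring.
    rewrite normCK rmorphM /= hsc' /s.
    transitivity (- 'i ^+ 2 * om ^+ 2 * (c * c^*)); first by ring.
    by rewrite sqrCi opprK mul1r.
  apply: le_trans (_ : (R - a) ^+ 2 + (om * b) ^+ 2 <= _).
    by rewrite lerDl; apply: sq0.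
  by rewrite e3; apply: ler_wpM2l => //; exact: cs_dot.
split.
  by move=> x [om [omr om0 ->]]; exact: (key om omr om0).1.
move=> bb Hb.
have hb0 : 0 <= bb.
  have := Hb _ (ex_intro _ 1 (And3 (@real1 C) (@oner_neq0 C) erefl)).
  exact: le_trans (normr_ge0 _).
rewrite real_leNgt ?ger0_real //; apply/negP => lt.
set d := R - bb.
have d0 : 0 < d by rewrite subr_gt0.
set K := Y * R + 1.
have K0 : 0 < K := ltr_wpDl (mulr_ge0 hY0 hR0) ltr01.
set om := d ^+ 2 / K.
have om0 : 0 < om by rewrite divr_gt0 // exprn_gt0.
have [gR [a [b [a0 b0 ag bR ra]]]] := key om (gtr0_real om0) (lt0r_neq0 om0).
have gb := Hb _ (ex_intro _ om (And3 (gtr0_real om0) (lt0r_neq0 om0) erefl)).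
have ab : a <= bb := le_trans ag gb.
have dRa : d <= R - a by rewrite /d lerD2l lerN2.
have c1 : d ^+ 2 <= (R - a) ^+ 2.
  by rewrite ler_pXn2r ?nnegrE ?(ltW d0) // (le_trans (ltW d0) dRa).
have c2 : om ^+ 2 * (b * Y) <= om * Y * R.
  have -> : om ^+ 2 * (b * Y) = om * Y * (`|om| * b) by rewrite gtr0_norm //; ring.
  by apply: ler_wpM2l => //; rewrite mulr_ge0 // ltW.
have c3 : om * Y * R < d ^+ 2.
  have -> : om * Y * R = d ^+ 2 * (Y * R / K) by rewrite /om; ring.
  by rewrite gtr_pMr ?exprn_gt0 // ltr_pdivrMr // mul1r /K ltrDl ltr01.
have := le_lt_trans (le_trans c1 (le_trans ra c2)) c3.
by rewrite ltxx.
Qed.
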